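(* Let $\Sigma$ be an alphabet with $|\Sigma|\geq 3$ and let $T=U\cdot P\cdot V$ be a string over $\Sigma$ such that $P$ is a non-empty string occurring exactly once in $T$ and $|U|,|V|<|P|$. Then there exists a string $P'$ over $\Sigma$ with $d_H(P,P')=1$ such that $T'=U\cdot P'\cdot V$ has no occurrence of $P$.
   Context: $\cdot$ denotes concatenation; $d_H$ is the Hamming distance between strings of equal length. *)

(* Defs.v *)
From mathcomp Require Import all_boot.
Set Implicit Arguments. Unset Strict Implicit. Unset Printing Implicit Defensive.

Definition occurs_at (S : eqType) (P T : seq S) (i : nat) : bool :=
  (i + size P <= size T) && (take (size P) (drop i T) == P).

Definition occ_count (S : eqType) (P T : seq S) : nat :=
  count (occurs_at P T) (iota 0 (size T).+1).

(* Hamming distance: number of mismatching positions (used on equal-length strings) *)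
Definition hamming (S : eqType) (x y : seq S) : nat :=
  count (fun p => p.1 != p.2) (zip x y).

(* Main.v *)
Require Import Defs.
From mathcomp Require Import all_boot zify.

Lemma occE (S : eqType) (x0 : S) (P T : seq S) i :
  occurs_at P T i <->
  (i + size P <= size T /\ forall k, k < size P -> nth x0 T (i + k) = nth x0 P k).
Proof.
rewrite /occurs_at; split.
  case/andP=> H /eqP E; split=> // k Hk.
  by rewrite -[in RHS]E nth_take // nth_drop.
case=> H E; rewrite H /=; apply/eqP.
have Hs : size (take (size P) (drop i T)) = size P by rewrite size_takel // size_drop; lia.
apply: (@eq_from_nth _ x0) => // k; rewrite Hs => Hk'.
by rewrite nth_take // nth_drop E.
Qed.

Arguments occE {S} x0 {P T i}.

Lemma count_two (p : pred nat) s a b : uniq s -> a \in s -> b \in s -> a != b ->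
  p a -> p b -> 1 < count p s.
Proof.
move=> Us As Bs ab pa pb.
rewrite ((permP (perm_to_rem As)) p) /= pa.
have : b \in rem a s by rewrite mem_rem_uniq // inE eq_sym ab.
move=> H; have : has p (rem a s) by apply/hasP; exists b.
rewrite has_count; lia.
Qed.

Lemma nthT' (S : eqType) (x0 : S) U V P1 (p0 c : S) n :
  nth x0 (U ++ (c :: P1) ++ V) n =
  if n == size U then c else nth x0 (U ++ (p0 :: P1) ++ V) n.
Proof.
rewrite !nth_cat; case: (ltngtP n (size U)) => H //.
  case E: (n - size U) => [|k]; first lia. by [].
by rewrite H subnn.
Qed.

Theorem lemma7 (Sigma : finType) (U P V : seq Sigma) :
  2 < #|Sigma| ->
  0 < size P ->
  occ_count P (U ++ P ++ V) = 1 ->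
  size U < size P -> size V < size P ->
  exists P' : seq Sigma,
    size P' = size P /\ hamming P P' = 1 /\
    occ_count P (U ++ P' ++ V) = 0.
Proof.
move=> HS Hm Hc Hu Hv.
case: P Hm Hc Hu Hv => [//|p0 P1] _ Hc Hu Hv.
set P := p0 :: P1 in Hc Hu Hv *.
set u := size U in Hu *.
set m := size P in Hu Hv *.
pose good d := all (fun k => nth p0 U (u - d + k) == nth p0 P k) (iota 0 d) &&
  all (fun t => nth p0 P t == nth p0 P (t + d)) (iota 1 (size P - d - 1)).
have goodE : forall d, good d ->
   (forall k, k < d -> nth p0 U (u - d + k) = nth p0 P k) /\
   (forall t, 0 < t -> t + d < size P -> nth p0 P t = nth p0 P (t + d)).
  move=> d /andP[/allP A /allP B]; split.
    move=> k Hk; apply/eqP/A; rewrite mem_iota; lia.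
  move=> t H1 H2; apply/eqP/B; rewrite mem_iota; lia.
have two : forall d1 d2, good d1 -> good d2 -> 0 < d1 < d2 -> d2 <= u ->
    nth p0 P d2 = p0.
  move=> d1 d2 /goodE[A1 B1] /goodE[A2 B2] H1 H2.
  have -> : d2 = (d2 - d1) + d1 by lia.
  rewrite -B1; [|lia|lia].
  have E1 := A1 0 ltac:(lia); have E2 := A2 (d2 - d1) ltac:(lia).
  have E3 : u - d1 + 0 = u - d2 + (d2 - d1) by lia.
  by rewrite -E2 -E3 E1.
pose d0 := (find good (iota 1 u)).+1.
have Hd0 : d0 = (find good (iota 1 u)).+1 := erefl.
pose x := nth p0 P d0.
have [c Hc1 Hc2] : exists2 c, c != p0 & c != x.
  case: (pickP [predC pred2 p0 x]) => [c /=|H].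
    by rewrite negb_or => /andP[A B]; exists c.
  have := cardC (pred2 p0 x); rewrite card2 (eq_card0 H).
  case: (p0 != x); lia.
exists (c :: P1); split=> //; split.
  rewrite /hamming /= eq_sym Hc1.
  suff -> : forall l : seq Sigma, count (fun p => p.1 != p.2) (zip l l) = 0 by [].
  by elim=> //= a l ->; rewrite eqxx.
apply/eqP; rewrite -leqn0 leqNgt -has_count; apply/hasPn => i Hi; change nat in i; apply/negP => Hocc.
move/(occE p0): Hocc => [Hsz Hk]; rewrite -/m in Hsz Hk.
have HT : forall n, nth p0 (U ++ (c :: P1) ++ V) n =
   if n == u then c else nth p0 (U ++ P ++ V) n by move=> n; apply: nthT'.
have HTP : forall k, k < size P -> nth p0 (U ++ P ++ V) (u + k) = nth p0 P k.
  move=> k Hk'; rewrite nth_cat ifF; last (rewrite /u; lia).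
  have -> : u + k - size U = k by rewrite /u; lia.
  by rewrite nth_cat Hk'.
have HTU : forall n, n < u -> nth p0 (U ++ P ++ V) n = nth p0 U n.
  by move=> n Hn; rewrite nth_cat Hn.
have szT : size (U ++ P ++ V) = size (U ++ (c :: P1) ++ V) by rewrite !size_cat.
case: (ltngtP i u) => Hiu.
-
  pose d := u - i.
  have Hd : d = u - i := erefl.
  have Hgood : good d.
    apply/andP; split; apply/allP => k; change nat in k; rewrite mem_iota => Hk'.
      have := Hk k; rewrite HT ifF; last lia.
      rewrite HTU; last lia.
      have -> : u - d + k = i + k by rewrite /d; lia.
      move=> H; rewrite H //; lia.
    have := Hk (k + d); rewrite HT ifF; last lia.
    have -> : i + (k + d) = u + k by rewrite /d; lia.
    rewrite HTP; last lia. move=> ->; [by []|lia].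
  have Hcd : c = nth p0 P d.
    have := Hk d; rewrite HT ifT; last (apply/eqP; rewrite /d; lia).
    by apply; rewrite /d; lia.
  case: (ltngtP d d0) => Hdd.
  + have := @before_find _ 0 good (iota 1 u) (d - 1).
    rewrite nth_iota; last (rewrite /d; lia).
    have -> : 1 + (d - 1) = d by rewrite /d; lia.
    by rewrite Hgood => H; have := H ltac:(rewrite /d0 in Hdd; lia).
  + have Hhas : has good (iota 1 u).
      apply/hasP; exists d => //; rewrite mem_iota /d; lia.
    have Hf : find good (iota 1 u) < u.
      by have := Hhas; rewrite has_find size_iota.
    have := nth_find 0 Hhas; rewrite nth_iota // add1n => Hg0.
    have := two _ _ Hg0 Hgood; rewrite -Hcd => H.
    by move/eqP: Hc1; apply; apply: H; rewrite /d0 in Hdd; rewrite /d; lia.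
  + by move/eqP: Hc2; apply; rewrite Hcd Hdd.
-
  have O1 : occurs_at P (U ++ P ++ V) i.
    apply/(occE p0); split; first by rewrite szT.
    move=> k Hk'; rewrite -Hk // HT ifF //; lia.
  have O2 : occurs_at P (U ++ P ++ V) u.
    apply/(occE p0); split; first by rewrite !size_cat /u leq_add2l leq_addr.
    by move=> k Hk'; rewrite HTP.
  have := @count_two (occurs_at P (U ++ P ++ V)) (iota 0 (size (U ++ P ++ V)).+1) i u.
  rewrite /occ_count in Hc; rewrite Hc iota_uniq !mem_iota => H.
  have : 1 < 1.
    apply: H => //.
    - rewrite ltnS szT; apply: leq_trans Hsz; apply: leq_addr.
    - by rewrite ltnS !size_cat /u leq_addr.
    - by rewrite neq_ltn Hiu orbT.
  by [].
- have := Hk 0 isT; rewrite addn0 HT Hiu eqxx /= => E.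
  by move/eqP: Hc1.
Qed.
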